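(* Let $X$ be a set of reals. Then $B(X)$ satisfies $S_{fin}(\mathcal{D},\mathcal{D})$ if and only if $X$ satisfies $S_{fin}(B_\Omega, B_\Omega)$.
   Context: $B(X)$ is the set of all real-valued Borel functions on $X$ with the topology of pointwise convergence. $S_{fin}(\mathcal{A},\mathcal{B})$ means: for every sequence $(A_n:n\in\mathbb{N})$ of elements of $\mathcal{A}$ there are finite sets $B_n\subseteq A_n$ with $\bigcup_n B_n\in\mathcal{B}$. For the space $B(X)$, $\mathcal{D}$ is the family of all countable dense subsets of $B(X)$. A cover $\mathcal{U}$ of $X$ is an $\omega$-cover if $X\notin\mathcal{U}$ and every finite subset of $X$ is contained in some member of $\mathcal{U}$; $B_\Omega$ is the family of all countable $\omega$-covers of $X$ consisting of Borel sets. *)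

(* Defs.v *)
From HB Require Import structures.
From mathcomp Require Import all_boot all_order all_algebra.
From mathcomp Require Import all_classical all_reals all_analysis.
Unset Printing Implicit Defensive.
Import Order.TTheory GRing.Theory Num.Theory numFieldNormedType.Exports.
Local Open Scope classical_set_scope.

Section Defs.
Context {R : realType}.

Definition pts (X : set R) := {x : R | X x}.

Definition rel_open (X : set R) (A : set (pts X)) : Prop :=
  exists U : set R, open U /\ A = (@proj1_sig R X) @^-1` U.

Definition rel_borel (X : set R) (A : set (pts X)) : Prop :=
  <<s rel_open X >> A.

Definition borel_fun (X : set R) (f : pts X -> R) : Prop :=
  forall U : set R, open U -> rel_borel X (f @^-1` U).

Definition BX (X : set R) : set {ptws pts X -> R} :=
  [set f | borel_fun X (f : pts X -> R)].

(* The family D of countable dense subsets of B(X) (density taken in the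
   subspace B(X) of R^X: D is contained in B(X) and B(X) lies in the
   closure of D). *)
Definition Dfam (X : set R) : set (set {ptws pts X -> R}) :=
  [set D | [/\ D `<=` BX X, countable D & BX X `<=` closure D]].

Definition omega_cover (X : set R) (U : set (set (pts X))) : Prop :=
  [/\ \bigcup_(V in U) V = setT, ~ U setT &
      forall F : set (pts X), finite_set F -> exists2 V, U V & F `<=` V].

Definition BOmega (X : set R) : set (set (set (pts X))) :=
  [set U | [/\ omega_cover X U, countable U & forall V, U V -> rel_borel X V]].

End Defs.

Definition Sfin {T : Type} (A B : set (set T)) : Prop :=
  forall An : nat -> set T, (forall n, A (An n)) ->
  exists Bn : nat -> set T,
    (forall n, finite_set (Bn n) /\ Bn n `<=` An n) /\ B (\bigcup_n Bn n).

(* Main.v *)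
Require Import Defs.
From HB Require Import structures.
From mathcomp Require Import all_boot all_order all_algebra.
From mathcomp Require Import all_classical all_reals all_analysis.
Import Order.TTheory GRing.Theory Num.Theory numFieldNormedType.Exports.
Local Open Scope classical_set_scope.
Local Open Scope ring_scope.

Section Aux.
Context {R : realType} (X : set R).
Local Notation T := (pts X).

Lemma rb_sa : sigma_algebra setT (rel_borel X).
Proof. exact: smallest_sigma_algebra. Qed.

Lemma rb_open (U : set R) : open U -> rel_borel X ((@proj1_sig R X) @^-1` U).
Proof. by move=> oU; apply: sub_sigma_algebra; exists U. Qed.

Lemma rb_set0 : rel_borel X set0.
Proof. by case: rb_sa. Qed.

Lemma rb_C (A : set T) : rel_borel X A -> rel_borel X (~` A).
Proof. by case: rb_sa => _ h _ /h; rewrite setTD. Qed.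

Lemma rb_setT : rel_borel X setT.
Proof. by rewrite -setC0; apply: rb_C; exact: rb_set0. Qed.

Lemma rb_U (A B : set T) : rel_borel X A -> rel_borel X B -> rel_borel X (A `|` B).
Proof.
move=> hA hB; case: rb_sa => _ _ h.
have -> : A `|` B = \bigcup_k (if k == 0%N then A else B).
  apply/seteqP; split => x.
    by case=> ?; [exists 0%N | exists 1%N].
  by case=> k _; case: (k == 0%N) => ?; [left|right].
by apply: h => k; case: (k == 0%N).
Qed.

Lemma rb_I (A B : set T) : rel_borel X A -> rel_borel X B -> rel_borel X (A `&` B).
Proof.
move=> hA hB; rewrite -[A `&` B]setCK setCI; apply: rb_C.
by apply: rb_U; apply: rb_C.
Qed.

Lemma rb_bigcup (A : nat -> set T) : (forall n, rel_borel X (A n)) ->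
  rel_borel X (\bigcup_n A n).
Proof. by case: rb_sa => _ _ h; exact: h. Qed.

Fixpoint inl (x : T) (s : seq T) : Prop :=
  match s with [::] => False | y :: s => y = x \/ inl x s end.

Lemma finite_inl (s : seq T) : finite_set [set x | inl x s].
Proof.
elim: s => [|y s IH] /=.
  by have -> : [set x | False] = @set0 T by apply/seteqP; split => x.
have -> : [set x | y = x \/ inl x s] = [set y] `|` [set x | inl x s].
  by apply/seteqP; split => x /=; case=> h; [left|right|left|right].
by rewrite finite_setU; split => //; exact: finite_set1.
Qed.

Lemma finite_to_inl (F : set T) : finite_set F -> exists s, forall x, F x -> inl x s.
Proof.
move=> fF.
have fF' : finite_set (F : set {classic T}) by [].
have [s Fs] := (finite_seqP (F : set {classic T})).1 fF'.
exists s; move=> x Fx; move: Fx; rewrite Fs /=.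
elim: s {Fs} => [|y s IH] //=.
rewrite in_cons => /orP [/eqP ->|/IH]; by [left|right].
Qed.

Lemma countable_img {A B : Type} (f : A -> B) (S : set A) :
  countable S -> countable (f @` S).
Proof. by move=> cS; apply: card_le_trans (card_image_le f S) cS. Qed.

Lemma pts_eq (x y : T) : proj1_sig x = proj1_sig y -> x = y.
Proof.
case: x => x hx; case: y => y hy /= exy; subst y.
by congr exist; exact: Prop_irrelevance.
Qed.

End Aux.
Arguments inl {R X}.

Section Top.
Context {R : realType} (X : set R).
Local Notation T := (pts X).
Definition ptsTop := initial_topology (fun x : {classic T} => proj1_sig x).

Lemma ptws_cvg (F : set_system {ptws T -> R}) (f : {ptws T -> R}) : Filter F ->
  F --> f <-> forall t : T, (fun g => g t) @ F --> f t.
Proof. move=> FF; exact: (@pointwise_cvgP ptsTop R F f FF). Qed.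

Lemma nbhs_close (f : {ptws T -> R}) (s : seq T) (e : R) : 0 < e ->
  nbhs f [set g : {ptws T -> R} | forall x, inl x s -> `|g x - f x| < e].
Proof.
move=> e0; elim: s => [|y s IH] /=.
  by apply: filterS (@filterT _ (nbhs f) _) => g _ x.
have Hy : nbhs f [set g : {ptws T -> R} | `|g y - f y| < e].
  have := (@ptws_cvg _ f (@nbhs_filter _ f)).1 (@cvg_id _ (nbhs f)) y.
  move/(cvg_ballP _ _).1 => /(_ e e0).
  by apply: filterS => g; rewrite -ball_normE /= distrC.
apply: filterS (filterI Hy IH) => g [h1 h2] x [<-|]; [exact: h1|exact: h2].
Qed.

Lemma closure_close (D : set {ptws T -> R}) (f : {ptws T -> R}) :
  closure D f -> forall (s : seq T) (e : R), 0 < e ->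
  exists2 d, D d & forall x, inl x s -> `|d x - f x| < e.
Proof.
move=> cf s e e0; have [d [Dd Hd]] := cf _ (@nbhs_close f s e e0).
by exists d.
Qed.

Lemma inl_cat (x : T) s1 s2 : inl x (s1 ++ s2) <-> inl x s1 \/ inl x s2.
Proof.
elim: s1 => [|y s1 IH] /=; first by split => [|[]//]; right.
rewrite IH; tauto.
Qed.

Lemma close_closure (D : set {ptws T -> R}) (f : {ptws T -> R}) :
  (forall (s : seq T) (e : R), 0 < e ->
    exists2 d, D d & forall x, inl x s -> `|d x - f x| < e) -> closure D f.
Proof.
move=> H.
pose B (p : seq T * R) := [set g : {ptws T -> R} | D g /\
   forall x, inl x p.1 -> `|g x - f x| < p.2].
pose I := [set p : seq T * R | 0 < p.2].
have FG : Filter (filter_from I B).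
  apply: filter_from_filter; first by exists ([::], 1); rewrite /I /= ltr01.
  move=> [s1 e1] [s2 e2] /= h1 h2; exists (s1 ++ s2, Num.min e1 e2).
    by rewrite /I /= lt_min h1 h2.
  move=> g [Dg Hg] /=; split; split => // x hx;
   (have : (`|g x - f x| < e1) && (`|g x - f x| < e2)
     by rewrite -lt_min; apply: Hg; rewrite inl_cat; tauto);
   by move/andP=> [].

have cvgG : filter_from I B --> f.
  apply/ptws_cvg => t; apply/(cvg_ballP _ _).2 => e e0.
  exists ([:: t], e) => //= g [_ Hg]; rewrite /= -ball_normE /= distrC.
  by apply: Hg; left.
move=> N /cvgG [[s e] /= e0 sub].
have [d Dd Hd] := H s e e0; exists d; split => //; apply: sub; split => //.
Qed.
End Top.
From mathcomp Require Import lra.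
Section Step.
Context {R : realType} (X : set R).
Local Notation T := (pts X).

Definition gs (s : seq (rat * rat * rat)) : T -> R :=
  foldr (fun p g x => if (ratr p.1.1 < proj1_sig x < ratr p.1.2) then ratr p.2 else g x)
    (fun _ => 0) s.

Lemma rb_cst (A : set T) : (A = setT \/ A = set0) -> rel_borel X A.
Proof. by case=> ->; [exact: rb_setT|exact: rb_set0]. Qed.

Lemma gs_borel s : borel_fun X (gs s).
Proof.
elim: s => [|[[a b] q] s IH] U oU /=.
  apply: rb_cst; have [U0|U0] := pselect (U 0); [left|right];
    by apply/seteqP; split => x //=.
pose I := (@proj1_sig R X) @^-1` `]ratr a, ratr b[.
have bI : rel_borel X I by apply: rb_open; exact: itv_open.
have -> : (fun x : T => if ratr a < proj1_sig x < ratr b then ratr q else gs s x) @^-1` U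
   = (I `&` [set _ | U (ratr q)]) `|` (~` I `&` (gs s @^-1` U)).
  apply/seteqP; split => x; rewrite /I /= in_itv /=; case: (ratr a < proj1_sig x < ratr b) => //=;
   first [by move=> h; left | by move=> h; right | by case=> [[]|[]]].
apply: (rb_U X); apply: (rb_I X) => //; [|exact: (rb_C X)|exact: IH].
by apply: rb_cst; have [Uq|Uq] := pselect (U (ratr q)); [left|right];
  apply/seteqP; split => x.
Qed.

Lemma rat_between (a b : R) : a < b -> exists q : rat, a < ratr q < b.
Proof.
move=> ab; have [|z [h [q _ qz]]] := @dense_rat R `]a, b[%classic _ (itv_open _ _).
  exists ((a + b) / 2) => /=; rewrite in_itv /=; have := midf_lt ab.
  by case=> -> ->.
by exists q; move: h; rewrite -qz /= in_itv.
Qed.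

Lemma avoid (s0 : seq T) (x : T) : ~ inl x s0 ->
  exists a b : rat, ratr a < proj1_sig x < ratr b /\
    forall y, inl y s0 -> ~ (ratr a < proj1_sig y < ratr b).
Proof.
elim: s0 => [|y s0 IH] /=.
  move=> _.
  have [a /andP[_ ha]] := @rat_between (proj1_sig x - 1) (proj1_sig x) ltac:(lra).
  have [b /andP[hb _]] := @rat_between (proj1_sig x) (proj1_sig x + 1) ltac:(lra).
  by exists a, b; rewrite ha hb.
move=> /not_orP [nyx nxs].
have [a [b [/andP[ha hb] H]]] := IH nxs.
have nv : proj1_sig y != proj1_sig x.
  by apply/eqP => /pts_eq.
case: (ltgtP (proj1_sig y) (proj1_sig x)) => [yx|xy|yx]; last by rewrite yx eqxx in nv.
- have [a' /andP[h1 h2]] := @rat_between (Num.max (ratr a) (proj1_sig y)) (proj1_sig x)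
    ltac:(by rewrite gt_max ha yx).
  move: h1; rewrite gt_max => /andP[h1 h3].
  exists a', b; rewrite h2 hb; split => // z [<-|zs] /andP[z1 z2].
    by move: z1; rewrite ltNge (ltW h3).
  by apply: (H z zs); rewrite z2 (lt_trans h1 z1).
- have [b' /andP[h1 h2]] := @rat_between (proj1_sig x) (Num.min (ratr b) (proj1_sig y))
    ltac:(by rewrite lt_min hb xy).
  move: h2; rewrite lt_min => /andP[h2 h3].
  exists a, b'; rewrite h1 ha; split => // z [<-|zs] /andP[z1 z2].
    by move: z2; rewrite ltNge (ltW h3).
  by apply: (H z zs); rewrite z1 (lt_trans z2 h2).
Qed.

Lemma gs_dense (s0 : seq T) (f : T -> R) (e : R) : 0 < e ->
  exists s, forall x, inl x s0 -> `|gs s x - f x| < e.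
Proof.
move=> e0; elim: s0 => [|x s0 [s IH]] /=; first by exists [::].
have [xs|nxs] := pselect (inl x s0).
  by exists s => y [<-|ys]; apply: IH.
have [a [b [hx H]]] := @avoid _ _ nxs.
have [q /andP[q1 q2]] := @rat_between (f x - e) (f x + e) ltac:(lra).
exists ((a, b, q) :: s) => y [<-|ys] /=.
  by rewrite hx distrC ltr_distlC q1 q2.
have /negP/negbTE -> := H y ys.
exact: IH.
Qed.

Definition Gset : set (T -> R) := range gs.

Lemma Gset_countable : countable Gset.
Proof. exact: countable_img (countableP _). Qed.

End Step.
Arguments gs {R X}.
From mathcomp Require Import lra.
Section Dir1.
Context {R : realType} (X : set R).
Local Notation T := (pts X).

Lemma close_borel (d : T -> R) (s : seq (rat * rat * rat)) (e : R) :
  borel_fun X d -> rel_borel X [set x | `|d x - gs s x| < e].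
Proof.
move=> hd; elim: s => [|[[a b] q] s IH] /=.
  have -> : [set x : T | `|d x - 0| < e] = d @^-1` `]-e, e[%classic.
    by apply/seteqP; split => x /=; rewrite subr0 in_itv /= ltr_norml.
  by apply: hd; exact: itv_open.
pose I := (@proj1_sig R X) @^-1` `]ratr a, ratr b[.
have bI : rel_borel X I by apply: rb_open; exact: itv_open.
have -> : [set x : T | `|d x - (if ratr a < proj1_sig x < ratr b then ratr q else gs s x)| < e]
   = (I `&` (d @^-1` `]ratr q - e, ratr q + e[%classic)) `|`
     (~` I `&` [set x | `|d x - gs s x| < e]).
  apply/seteqP; split => x; rewrite /I /= !in_itv /= -ltr_distlC (distrC (ratr q));
    case: (ratr a < proj1_sig x < ratr b) => //=;
   first [by move=> h; left | by move=> h; right | by case=> [[]|[]]].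
apply: (rb_U X); apply: (rb_I X) => //; [|exact: (rb_C X)].
by apply: hd; exact: itv_open.
Qed.

Lemma Dfam_close (D : set {ptws T -> R}) (f : {ptws T -> R}) :
  Dfam X D -> BX X f -> forall (s : seq T) (e : R), 0 < e ->
  exists2 d, D d & forall x, inl x s -> `|d x - f x| < e.
Proof. by case=> _ _ cD /cD; exact: closure_close. Qed.

Lemma claim (SB : Sfin (BOmega X) (BOmega X)) (Dn : nat -> set {ptws T -> R})
  (hD : forall n, Dfam X (Dn n)) (sg : seq (rat * rat * rat)) (e : R) :
  0 < e ->
  exists E : nat -> set {ptws T -> R},
    (forall j, finite_set (E j) /\ E j `<=` Dn j) /\
    (forall s : seq T, exists j, exists2 d, E j d &
        forall x, inl x s -> `|d x - gs sg x| < e).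
Proof.
move=> e0.
pose V (d : {ptws T -> R}) := [set x : T | `|d x - gs sg x| < e].
have gB : BX X (gs sg : {ptws T -> R}) by exact: gs_borel.
have [[j [d [Dd Vd]]]|nA] := pselect (exists j d, Dn j d /\ V d = setT).
  exists (fun j' => if j' == j then [set d] else set0); split.
    move=> j'; case: (j' == j) /eqP => [->|_]; split.
    - exact: finite_set1.
    - by move=> ? ->.
    - exact: finite_set0.
    - by [].
  move=> s; exists j, d; first by rewrite eqxx.
  by move=> x _; have : V d x by rewrite Vd.
pose U j := [set V d | d in Dn j].
have hU : forall j, BOmega X (U j).
  move=> j; have [DB cD _] := hD j; split.
  - split.
    + apply/seteqP; split => // x _.
      have [d Dd Hd] := @Dfam_close _ _ (hD j) gB [:: x] e e0.
      by exists (V d); [exists d|apply: Hd; left].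
    + by case=> d Dd Vd; apply: nA; exists j, d.
    + move=> F /finite_to_inl [s Fs].
      have [d Dd Hd] := @Dfam_close _ _ (hD j) gB s e e0.
      by exists (V d); [exists d|move=> x /Fs /Hd].
  - exact: countable_img.
  - by move=> _ [d Dd <-]; apply: close_borel; apply: DB.
have [Bn [hBn hB]] := SB U hU.
have /choice [ch hch] : forall p : nat * set T, exists d : {ptws T -> R},
  Bn p.1 p.2 -> Dn p.1 d /\ V d = p.2.
  move=> [j W] /=; have [h|h] := pselect (Bn j W).
    by have [d Dd <-] := (hBn j).2 _ h; exists d.
  by exists (fun _ => 0).
exists (fun j => (fun W => ch (j, W)) @` Bn j); split.
  move=> j; split; first exact: finite_image (hBn j).1.
  by move=> _ [W BW <-]; have [] := hch (j, W) BW.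
move=> s; case: hB => -[_ _ hom] _ _.
have [W [j _ BW] FW] := hom _ (finite_inl _ s).
exists j, (ch (j, W)); first by exists W.
move=> x xs; have [_ VW] := hch (j, W) BW.
by have : V (ch (j, W)) x by rewrite VW; apply: FW.
Qed.

End Dir1.
From mathcomp Require Import lra.
Section Dir1b.
Context {R : realType} (X : set R).
Local Notation T := (pts X).

Lemma small_inv (e : R) : 0 < e -> exists m : nat, m.+1%:R^-1 < e.
Proof.
move=> e0; have [N _ HN] := near_infty_natSinv_lt (PosNum e0).
by exists N; apply: HN => /=.
Qed.

Lemma dir1 : Sfin (BOmega X) (BOmega X) -> Sfin (Dfam X) (Dfam X).
Proof.
move=> SB Dn hD.
pose tgt (p : nat) : seq (rat * rat * rat) * nat := odflt ([::], 0%N) (pickle_inv p).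
have /choice [EE hEE] : forall p : nat, exists E : nat -> set {ptws T -> R},
    (forall j, finite_set (E j) /\ E j `<=` Dn (pickle (p, j))) /\
    (forall s : seq T, exists j, exists2 d, E j d &
        forall x, inl x s -> `|d x - gs (tgt p).1 x| < (tgt p).2.+1%:R^-1).
  move=> p; apply: (@claim _ X SB (fun j => Dn (pickle (p, j)))) => //.
pose En (n : nat) := match pickle_inv n with Some pj => EE pj.1 pj.2 | None => set0 end.
exists En; split.
  move=> n; rewrite /En; have := @pickle_invK (nat * nat)%type n.
  case: (pickle_inv n) => [[p j]|] /= hn; last by split => //; exact: finite_set0.
  have [fE sE] := (hEE p).1 j; split => //; by rewrite -hn.
have sub : \bigcup_n En n `<=` \bigcup_n Dn n.
  move=> d [n _ Ed]; exists n => //; move: Ed; rewrite /En; have := @pickle_invK (nat * nat)%type n.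
  by case: (pickle_inv n) => [[p j]|] //= hn /((hEE p).1 j).2; rewrite hn.
split.
- move=> d /sub [n _ Dd]; by have [+ _ _] := hD n; apply.
- apply: bigcup_countable; first exact: countableP.
  move=> n _; apply: finite_set_countable; rewrite /En.
  case: (pickle_inv n) => [[p j]|] /=; last exact: finite_set0.
  exact: ((hEE p).1 j).1.
- move=> f Bf; apply: close_closure => s e e0.
  have e20 : 0 < e / 2 by lra.
  have [sg Hsg] := @gs_dense _ X s f _ e20.
  have [m hm] := small_inv (e / 2) e20.
  pose p := pickle (sg, m).
  have tp : tgt p = (sg, m) by rewrite /tgt /p pickleK_inv.
  have [j [d Ed Hd]] := (hEE p).2 s.
  exists d.
    exists (pickle (p, j)) => //; by rewrite /En pickleK_inv.
  move=> x xs; have := Hd x xs; have := Hsg x xs; rewrite tp /= => h1 h2.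
  have := ler_distD (gs sg x) (d x) (f x).
  move: hm h2; move: (m.+1%:R^-1) => c; lra.
Qed.
End Dir1b.
From mathcomp Require Import lra.
Section Dir2.
Context {R : realType} (X : set R).
Local Notation T := (pts X).

Definition hfun (V : set T) (g : T -> R) : {ptws T -> R} :=
  fun x => if `[< V x >] then g x else 1.

Lemma hfun_borel V g : rel_borel X V -> borel_fun X g -> BX X (hfun V g).
Proof.
move=> bV bg U oU.
have -> : hfun V g @^-1` U = (V `&` (g @^-1` U)) `|` (~` V `&` [set _ | U 1]).
  apply/seteqP; split => x; rewrite /hfun /=; case: asboolP => //=;
   first [by move=> h1 h2; left | by move=> h1 h2; right | by move=> h1 [[]|[]]].
apply: (rb_U X); apply: (rb_I X) => //; [exact: bg|exact: (rb_C X)|].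
apply: rb_cst; have [U1|U1] := pselect (U 1); [left|right];
  by apply/seteqP; split => x.
Qed.

Lemma dir2 : Sfin (Dfam X) (Dfam X) -> Sfin (BOmega X) (BOmega X).
Proof.
move=> SD Un hU.
pose Dn n := \bigcup_(V in Un n) (hfun V @` (@Gset _ X)).
have hD : forall n, Dfam X (Dn n).
  move=> n; have [[_ _ hom] cU bU] := hU n; split.
  - move=> _ [V UV [g [sg _ <-] <-]]; apply: hfun_borel; first exact: bU.
    exact: gs_borel.
  - apply: bigcup_countable => // V _; apply: countable_img.
    exact: Gset_countable.
  - move=> f Bf; apply: close_closure => s e e0.
    have [V UV FV] := hom _ (finite_inl _ s).
    have [sg Hsg] := @gs_dense _ X s f _ e0.
    exists (hfun V (gs sg)); first by exists V => //; exists (gs sg) => //; exists sg.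
    move=> x xs; rewrite /hfun; case: asboolP => [_|]; first exact: Hsg.
    by move=> /(_ (FV x xs)).
have [En [hE hDE]] := SD Dn hD.
have /choice [ch hch] : forall p : nat * {ptws T -> R}, exists V : set T,
  En p.1 p.2 -> Un p.1 V /\ exists g, p.2 = hfun V g.
  move=> [n d] /=; have [h|h] := pselect (En n d); last by exists set0.
  have [V UV [g _ <-]] := (hE n).2 _ h.
  by exists V => _; split => //; exists g.
exists (fun n => (fun d => ch (n, d)) @` En n); split.
  move=> n; split; first exact: finite_image (hE n).1.
  by move=> _ [d Ed <-]; have [] := hch (n, d) Ed.
have f0B : BX X (fun _ : T => 0 : R).
  move=> U oU; apply: rb_cst; have [U0|U0] := pselect (U 0); [left|right];
  by apply/seteqP; split => x.
have hom : forall F : set T, finite_set F ->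
    exists2 V, (\bigcup_n (fun d => ch (n, d)) @` En n) V & F `<=` V.
  move=> F /finite_to_inl [s Fs].
  have [d [n _ Ed] Hd] := @Dfam_close _ X _ _ hDE f0B s 1 ltr01.
  have [UV [g dg]] := hch (n, d) Ed.
  exists (ch (n, d)); first by exists n => //; exists d.
  move: UV dg; move: (ch (n, d)) (hch (n, d)) => V _ UV /= dg.
  move=> x /Fs xs; have := Hd x xs; rewrite dg /hfun subr0.
  by case: asboolP => // _; rewrite normr1 ltxx.
split; [split|..].
- apply/seteqP; split => // x _.
  have [V UV Vx] := hom [set x] (finite_set1 x).
  by exists V => //; apply: Vx.
- case=> n _ [d Ed chT]; have [UV _] := hch (n, d) Ed.
  by have [[_ + _] _ _] := hU n; apply; rewrite -chT.
- exact: hom.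
- apply: bigcup_countable; first exact: countableP.
  by move=> n _; apply: finite_set_countable; exact: finite_image (hE n).1.
- move=> _ [n _ [d Ed <-]]; have [UV _] := hch (n, d) Ed.
  by have [_ _ +] := hU n; apply.
Qed.
End Dir2.

Theorem theorem3p5 (R : realType) (X : set R) :
  Sfin (Dfam X) (Dfam X) <-> Sfin (BOmega X) (BOmega X).
Proof. split; [exact: dir2 | exact: dir1]. Qed.
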